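(* With $u_e:\mathbf{k}\to\text{Ш}_e(A)$, $c\mapsto c1_A$, the quintuple $(\text{Ш}_e(A),\diamond,u_e,\Delta_e,\varepsilon_e)$ is a bialgebra.
   Context: $\mathbf{k}$ is a commutative unitary ring, $\lambda,\kappa\in\mathbf{k}$, $\mu$ a root of $t^2-\lambda t+\kappa$. An extended Rota-Baxter operator of weight $(\lambda,\kappa)$ satisfies $P(x)P(y)=P(xP(y))+P(P(x)y)+\lambda P(xy)+\kappa xy$. $A=(A,m_A,\mu_A,\Delta_A,\varepsilon_A)$ is a commutative bialgebra and $(\text{Ш}_e(A),\diamond,P_e,j_A)$ is the free commutative extended Rota-Baxter algebra of weight $(\lambda,\kappa)$ on $A$, with $\text{Ш}_e(A)=\bigoplus_{n\ge1}A^{\otimes n}$, $P_e(\mathfrak{a})=1_A\otimes\mathfrak{a}$, and the recursively defined generalized quasi-shuffle product $\diamond$. $\varepsilon_e:\text{Ш}_e(A)\to\mathbf{k}$ is the unique extended Rota-Baxter algebra homomorphism with $\varepsilon_e\circ j_A=\varepsilon_A$, $\varepsilon_e\circ P_e=-\mu\varepsilon_e$; $\Delta_e:\text{Ш}_e(A)\to\text{Ш}_e(A)\bar\otimes\text{Ш}_e(A)$ is the unique extended Rota-Baxter algebra homomorphism with $\Delta_e\circ j_A=\Delta_A$ and $\Delta_e\circ P_e=\bar P\circ\Delta_e$, where $\bar P(\mathfrak{a}\bar\otimes\mathfrak{b})=P_e(\mathfrak{a})\bar\otimes\varepsilon_e(\mathfrak{b})1_A+\mu\mathfrak{a}\bar\otimes\varepsilon_e(\mathfrak{b})1_A+\mathfrak{a}\bar\otimes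 P_e(\mathfrak{b})$ and $\bar\otimes$ is the tensor product between copies of $\text{Ш}_e(A)$. *)

(* Defs.v *)
(* Tensor products of modules over a commutative ring are not
   in MathComp; we build them here (classically) as a quotient of formal sums. *)
From HB Require Import structures.
From mathcomp Require Import all_boot all_order all_algebra.
From mathcomp Require Import boolp.
Set Implicit Arguments. Unset Strict Implicit. Unset Printing Implicit Defensive.
Import Order.TTheory GRing.Theory.
Local Open Scope ring_scope.

Definition lin (k : pzRingType) (U V : lmodType k) (f : U -> V) : Prop :=
  forall c x y, f (c *: x + y) = c *: f x + f y.

Definition slin (k : pzRingType) (U : lmodType k) (f : U -> k) : Prop :=
  forall c x y, f (c *: x + y) = c * f x + f y.

Definition klin (k : pzRingType) (U : lmodType k) (f : k -> U) : Prop :=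
  forall c x y, f (c * x + y) = c *: f x + f y.

Definition bilin (k : pzRingType) (M N P : lmodType k) (f : M -> N -> P) : Prop :=
  (forall c a a' b, f (c *: a + a') b = c *: f a b + f a' b) /\
  (forall c a b b', f a (c *: b + b') = c *: f a b + f a b').

Definition fsum (k : pzRingType) (M N P : lmodType k) (f : M -> N -> P)
  (s : seq (k * (M * N))) : P := \sum_(x <- s) x.1 *: f x.2.1 x.2.2.

(** two formal sums represent the same tensor iff every bilinear map agrees on them *)
Definition tequiv (k : pzRingType) (M N : lmodType k) (s t : seq (k * (M * N))) : Prop :=
  forall (P : lmodType k) (f : M -> N -> P), bilin f -> fsum f s = fsum f t.

Record tensor (k : pzRingType) (M N : lmodType k) := Tensor {
  tset : seq (k * (M * N)) -> Prop;
  tsetP : exists s, tset = tequiv s }.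

HB.instance Definition _ (k : pzRingType) (M N : lmodType k) :=
  gen_eqMixin (tensor M N).
HB.instance Definition _ (k : pzRingType) (M N : lmodType k) :=
  gen_choiceMixin (tensor M N).

Definition tpi (k : pzRingType) (M N : lmodType k) (s : seq (k * (M * N))) : tensor M N :=
  @Tensor k M N (tequiv s) (ex_intro _ s erefl).

Definition trepr (k : pzRingType) (M N : lmodType k) (t : tensor M N) : seq (k * (M * N)) :=
  projT1 (cid (tsetP t)).

Lemma trepr_spec (k : pzRingType) (M N : lmodType k) (t : tensor M N) :
  tset t = tequiv (trepr t).
Proof. by rewrite /trepr; case: cid. Qed.

Lemma tequiv_sym (k : pzRingType) (M N : lmodType k) (s t : seq (k * (M * N))) :
  tequiv s t -> tequiv t s.
Proof. by move=> H P f Hf; rewrite H. Qed.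

Lemma tequiv_trans (k : pzRingType) (M N : lmodType k) (s t u : seq (k * (M * N))) :
  tequiv s t -> tequiv t u -> tequiv s u.
Proof. by move=> H1 H2 P f Hf; rewrite H1 ?H2. Qed.

Lemma tensor_ext (k : pzRingType) (M N : lmodType k) (t u : tensor M N) :
  tset t = tset u -> t = u.
Proof.
case: t u => X HX [Y HY] /= E; subst Y; congr Tensor; exact: Prop_irrelevance.
Qed.

Lemma tpi_eq (k : pzRingType) (M N : lmodType k) (s t : seq (k * (M * N))) :
  tequiv s t -> tpi s = tpi t.
Proof.
move=> H; apply: tensor_ext => /=; apply: funext => u; apply: propext; split.
  by move=> H'; apply: tequiv_trans (tequiv_sym H) H'.
by move=> H'; apply: tequiv_trans H H'.
Qed.

Lemma treprK (k : pzRingType) (M N : lmodType k) (t : tensor M N) : tpi (trepr t) = t.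
Proof. by apply: tensor_ext => /=; rewrite trepr_spec. Qed.

Lemma trepr_tpi (k : pzRingType) (M N : lmodType k) (s : seq (k * (M * N))) :
  tequiv (trepr (tpi s)) s.
Proof.
have E := trepr_spec (tpi s); rewrite /= in E.
have : tequiv s s by [].
by rewrite E.
Qed.

Lemma fsum_trepr (k : pzRingType) (M N P : lmodType k) (f : M -> N -> P)
  (s : seq (k * (M * N))) : bilin f -> fsum f (trepr (tpi s)) = fsum f s.
Proof. by move=> Hf; apply: trepr_tpi. Qed.

Lemma fsum_cat (k : pzRingType) (M N P : lmodType k) (f : M -> N -> P) s t :
  fsum f (s ++ t) = fsum f s + fsum f t.
Proof. by rewrite /fsum big_cat. Qed.

Lemma fsum_nil (k : pzRingType) (M N P : lmodType k) (f : M -> N -> P) :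
  fsum f [::] = 0.
Proof. by rewrite /fsum big_nil. Qed.

Definition sscale (k : pzRingType) (M N : lmodType k) (c : k) (s : seq (k * (M * N))) :=
  map (fun x => (c * x.1, x.2)) s.

Lemma fsum_scale (k : pzRingType) (M N P : lmodType k) (f : M -> N -> P) c s :
  fsum f (sscale c s) = c *: fsum f s.
Proof.
rewrite /fsum /sscale big_map scaler_sumr; apply: eq_bigr => x _.
by rewrite scalerA.
Qed.

Definition tadd (k : pzRingType) (M N : lmodType k) (t u : tensor M N) : tensor M N :=
  tpi (trepr t ++ trepr u).
Definition tscale (k : pzRingType) (M N : lmodType k) (c : k) (t : tensor M N) : tensor M N :=
  tpi (sscale c (trepr t)).
Definition tzero (k : pzRingType) (M N : lmodType k) : tensor M N := tpi [::].
Definition topp (k : pzRingType) (M N : lmodType k) (t : tensor M N) : tensor M N :=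
  tscale (-1) t.

Ltac tsolve := apply: tpi_eq; intros ?P ?f ?Hf;
  match goal with H : bilin _ |- _ =>
  rewrite ?fsum_cat ?fsum_scale ?(@fsum_trepr _ _ _ _ _ _ H) ?fsum_nil; rewrite ?fsum_cat ?fsum_scale ?(@fsum_trepr _ _ _ _ _ _ H) ?fsum_nil; rewrite ?fsum_cat ?fsum_scale ?(@fsum_trepr _ _ _ _ _ _ H) ?fsum_nil end.

Lemma taddA (k : pzRingType) (M N : lmodType k) : associative (@tadd k M N).
Proof. by move=> x y z; rewrite /tadd; tsolve; rewrite addrA. Qed.
Lemma taddC (k : pzRingType) (M N : lmodType k) : commutative (@tadd k M N).
Proof. by move=> x y; rewrite /tadd; tsolve; rewrite addrC. Qed.
Lemma tadd0 (k : pzRingType) (M N : lmodType k) : left_id (@tzero k M N) (@tadd k M N).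
Proof. by move=> x; rewrite /tadd /tzero -[RHS]treprK; tsolve; rewrite add0r. Qed.
Lemma taddN (k : pzRingType) (M N : lmodType k) :
  left_inverse (@tzero k M N) (@topp k M N) (@tadd k M N).
Proof. by move=> x; rewrite /tadd /topp /tscale /tzero; tsolve; rewrite scaleN1r addNr. Qed.

HB.instance Definition _ (k : pzRingType) (M N : lmodType k) :=
  GRing.isZmodule.Build (tensor M N) (@taddA k M N) (@taddC k M N) (@tadd0 k M N) (@taddN k M N).

Lemma tscaleA (k : pzRingType) (M N : lmodType k) a b (v : tensor M N) :
  tscale a (tscale b v) = tscale (a * b) v.
Proof. by rewrite /tscale; tsolve; rewrite scalerA. Qed.
Lemma tscale1 (k : pzRingType) (M N : lmodType k) : left_id 1 (@tscale k M N).
Proof. by move=> x; rewrite /tscale -[RHS]treprK; tsolve; rewrite scale1r. Qed.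
Lemma tscaleDr (k : pzRingType) (M N : lmodType k) :
  right_distributive (@tscale k M N) +%R.
Proof. by move=> a x y; rewrite /tscale /= /tadd; tsolve; rewrite scalerDr. Qed.
Lemma tscaleDl (k : pzRingType) (M N : lmodType k) (v : tensor M N) :
  {morph (fun a => @tscale k M N a v) : a b / a + b}.
Proof. by move=> a b; rewrite /tscale /= /tadd; tsolve; rewrite scalerDl. Qed.

HB.instance Definition _ (k : pzRingType) (M N : lmodType k) :=
  GRing.Zmodule_isLmodule.Build k (tensor M N) (@tscaleA k M N) (@tscale1 k M N)
    (@tscaleDr k M N) (@tscaleDl k M N).

Definition tens (k : pzRingType) (M N : lmodType k) (a : M) (b : N) : tensor M N :=
  tpi [:: (1, (a, b))].

Definition tlift (k : pzRingType) (M N P : lmodType k) (f : M -> N -> P)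
  (t : tensor M N) : P := fsum f (trepr t).

Lemma tlift_tens (k : pzRingType) (M N P : lmodType k) (f : M -> N -> P) a b :
  bilin f -> tlift f (tens a b) = f a b.
Proof. by move=> Hf; rewrite /tlift /tens fsum_trepr // /fsum big_seq1 scale1r. Qed.

Definition tmap (k : pzRingType) (M N M' N' : lmodType k) (f : M -> M') (g : N -> N') :
  tensor M N -> tensor M' N' := tlift (fun a b => tens (f a) (g b)).

Definition tassoc (k : pzRingType) (M N Q : lmodType k) :
  tensor (tensor M N) Q -> tensor M (tensor N Q) :=
  tlift (fun x c => tlift (fun a b => tens a (tens b c)) x).

Definition tmul (k : pzRingType) (H : lmodType k) (m : H -> H -> H)
  (x y : tensor H H) : tensor H H :=
  tlift (fun a b => tlift (fun c d => tens (m a c) (m b d)) y) x.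

Record is_bialgebra (k : comPzRingType) (H : lmodType k) (m : H -> H -> H) (u : k -> H)
    (D : H -> tensor H H) (e : H -> k) : Prop := IsBialgebra {
  bialg_m_bilin : bilin m;
  bialg_u_lin : klin u;
  bialg_D_lin : lin D;
  bialg_e_lin : slin e;
  bialg_m_assoc : forall x y z, m (m x y) z = m x (m y z);
  bialg_unit_l : forall c x, m (u c) x = c *: x;
  bialg_unit_r : forall c x, m x (u c) = c *: x;
  bialg_coassoc : forall x, tassoc (tmap D id (D x)) = tmap id D (D x);
  bialg_counit_l : forall x, tlift (fun a b => e a *: b) (D x) = x;
  bialg_counit_r : forall x, tlift (fun a b => e b *: a) (D x) = x;
  bialg_D_mul : forall x y, D (m x y) = tmul m (D x) (D y);
  bialg_D_unit : forall c, D (u c) = tens (u c) (u 1);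
  bialg_e_mul : forall x y, e (m x y) = e x * e y;
  bialg_e_unit : forall c, e (u c) = c }.

Definition ext_RB_op (k : comPzRingType) (R : comAlgType k) (lam kap : k) (P : R -> R) : Prop :=
  lin P /\
  forall x y, P x * P y = P (x * P y) + P (P x * y) + lam *: P (x * y) + kap *: (x * y).

Definition alg_hom (k : comPzRingType) (R S : comAlgType k) (f : R -> S) : Prop :=
  [/\ lin f, forall x y, f (x * y) = f x * f y & f 1 = 1].

Definition free_comm_ext_RB (k : comPzRingType) (lam kap : k) (A F : comAlgType k)
    (P : F -> F) (j : A -> F) : Prop :=
  [/\ ext_RB_op lam kap P, alg_hom j &
    forall (R : comAlgType k) (Q : R -> R) (f : A -> R),
      ext_RB_op lam kap Q -> alg_hom f ->
      exists g : F -> R,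
        [/\ alg_hom g, (forall x, g (P x) = Q (g x)) & (forall a, g (j a) = f a)] /\
        (forall g' : F -> R, alg_hom g' -> (forall x, g' (P x) = Q (g' x)) ->
           (forall a, g' (j a) = f a) -> g' = g)].

(** eps_e : F -> k is an extended RB algebra homomorphism (k carrying the operator
    -mu id) with eps_e o j = eps_A and eps_e o P = -mu eps_e *)
Definition is_counit_e (k : comPzRingType) (mu : k) (A F : comAlgType k)
    (P : F -> F) (j : A -> F) (eA : A -> k) (e : F -> k) : Prop :=
  [/\ slin e, (forall x y, e (x * y) = e x * e y), e 1 = 1,
      (forall a, e (j a) = eA a) & (forall x, e (P x) = - mu * e x)].

Definition Pbar (k : comPzRingType) (mu : k) (F : comAlgType k) (P : F -> F) (e : F -> k) :
  tensor F F -> tensor F F :=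
  tlift (fun a b => tens (P a) (e b *: 1) + mu *: tens a (e b *: 1) + tens a (P b)).

Definition is_comul_e (k : comPzRingType) (mu : k) (A F : comAlgType k)
    (P : F -> F) (j : A -> F) (DA : A -> tensor A A) (e : F -> k) (D : F -> tensor F F) : Prop :=
  [/\ lin D, (forall x y, D (x * y) = tmul (fun a b : F => a * b) (D x) (D y)),
      D 1 = tens 1 1, (forall a, D (j a) = tmap j j (DA a)) &
      (forall x, D (P x) = Pbar mu P e (D x))].

(* Main.v *)
Require Import Defs.
From HB Require Import structures.
From mathcomp Require Import all_boot all_order all_algebra.
From mathcomp Require Import boolp.
Import GRing.Theory.
Local Open Scope ring_scope.
Set Implicit Arguments. Unset Strict Implicit. Unset Printing Implicit Defensive.
Section Sub.
Variables (k : comPzRingType) (F : comAlgType k) (S : F -> Prop).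
Hypothesis S1 : S 1.
Hypothesis Slin : forall c x y, S x -> S y -> S (c *: x + y).
Hypothesis Smul : forall x y, S x -> S y -> S (x * y).

Definition Sb : {pred F} := fun x => `[< S x >].
Record subS := SubS { sv : F; svP : Sb sv }.
HB.instance Definition _ := [isSub for sv].
HB.instance Definition _ := [Choice of subS by <:].

Lemma S0 : S 0.
Proof. by have := Slin (-1) S1 S1; rewrite scaleN1r addNr. Qed.

Lemma Sb_closed : GRing.subsemialg_closed Sb.
Proof.
split; rewrite /Sb.
- by apply/asboolP.
- split; first by apply/asboolP; exact: S0.
  move=> x y /asboolP Hx /asboolP Hy; apply/asboolP.
  by have := Slin 1 Hx Hy; rewrite scale1r.
- move=> a x /asboolP Hx; apply/asboolP.
  by have := Slin a Hx S0; rewrite addr0.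
- by move=> x y /asboolP Hx /asboolP Hy; apply/asboolP; apply: Smul.
Qed.

HB.instance Definition _ := GRing.SubChoice_isSubAlgebra.Build k F Sb subS Sb_closed.
HB.instance Definition _ := GRing.SubNzRing_isSubComNzRing.Build F Sb subS.

Lemma svD (x y : subS) : sv (x + y) = sv x + sv y. Proof. by []. Qed.
Lemma svZ c (x : subS) : sv (c *: x) = c *: sv x. Proof. by []. Qed.
Lemma svM (x y : subS) : sv (x * y) = sv x * sv y. Proof. by []. Qed.
Lemma sv1 : sv (1 : subS) = 1. Proof. by []. Qed.
End Sub.

Section Ind.
Variables (k : comPzRingType) (lam kap : k) (A F : comAlgType k) (P : F -> F) (j : A -> F).
Hypothesis hfree : free_comm_ext_RB lam kap P j.
Variable S : F -> Prop.
Hypothesis S1 : S 1.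
Hypothesis Slin : forall c x y, S x -> S y -> S (c *: x + y).
Hypothesis Smul : forall x y, S x -> S y -> S (x * y).
Hypothesis SP : forall x, S x -> S (P x).
Hypothesis Sj : forall a, S (j a).

Lemma F_ind x : S x.
Proof.
case: hfree => [[Plin PRB] [jlin jmul j1] univ].
have SbP (y : subS S) : Sb S (P (sv y)).
  by apply/asboolP; apply: SP; apply/asboolP; exact: svP.
pose PS (y : subS S) : subS S := SubS (SbP y).
have Sbj a : Sb S (j a) by apply/asboolP.
pose jS a : subS S := SubS (Sbj a).
have valI : injective (@sv _ _ S).
  by move=> [a Ha] [b Hb] /= E; subst b; congr SubS; apply: eq_irrelevance.
have hPS : ext_RB_op lam kap PS.
  split.
    by move=> c y z; apply: valI; rewrite /= Plin.
  by move=> y z; apply: valI; rewrite /= PRB.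
have hjS : alg_hom jS.
  split.
  - by move=> c y z; apply: valI; rewrite /= jlin.
  - by move=> y z; apply: valI; rewrite /= jmul.
  - by apply: valI; rewrite /= j1.
have [g [[[glin gmul g1] gP gj] _]] := univ _ PS jS (hPS S1 Slin Smul) (hjS S1 Slin Smul).
have hid : alg_hom (@id F) by split.
have [g0 [_ uniq]] := univ _ P j (conj Plin PRB) (And3 jlin jmul j1).
have E1 := uniq id hid (fun _ => erefl) (fun _ => erefl).
have E2 : (fun y => sv (g y)) = g0.
  apply: uniq.
  - split.
    + by move=> c y z; rewrite glin svD svZ.
    + by move=> y z; rewrite gmul svM.
    + by rewrite g1.
  - by move=> y; rewrite gP.
  - by move=> a; rewrite gj.
have : sv (g x) = x by have := congr1 (fun f => f x) E2; rewrite /= -E1.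
move=> <-; apply/asboolP; exact: svP.
Qed.
End Ind.
Section Toolkit.
Variable k : comPzRingType.
Implicit Types M N P Q : lmodType k.

Lemma lin0 M N (L : M -> N) : lin L -> L 0 = 0.
Proof. by move=> H; have := H (-1) 0 0; rewrite scaler0 addr0 scaleN1r addNr. Qed.
Lemma linD M N (L : M -> N) : lin L -> forall x y, L (x + y) = L x + L y.
Proof. by move=> H x y; rewrite -{1}(scale1r x) H scale1r. Qed.
Lemma linZ M N (L : M -> N) : lin L -> forall c x, L (c *: x) = c *: L x.
Proof. by move=> H c x; rewrite -[c *: x]addr0 H lin0 // addr0. Qed.

Lemma lin_id M : lin (@id M). Proof. by []. Qed.
Lemma lin_comp M N P (f : N -> P) (g : M -> N) : lin f -> lin g -> lin (fun x => f (g x)).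
Proof. by move=> Hf Hg c x y; rewrite Hg Hf. Qed.
Lemma lin_add M N (f g : M -> N) : lin f -> lin g -> lin (fun x => f x + g x).
Proof. by move=> Hf Hg c x y; rewrite Hf Hg scalerDr addrACA. Qed.
Lemma lin_scale M N (f : M -> N) d : lin f -> lin (fun x => d *: f x).
Proof. by move=> Hf c x y; rewrite Hf scalerDr !scalerA mulrC. Qed.
Lemma lin_sc M N (e : M -> k) (v : N) : slin e -> lin (fun x => e x *: v).
Proof. by move=> He c x y; rewrite He scalerDl scalerA. Qed.

Lemma bilin_add M N P (f g : M -> N -> P) : bilin f -> bilin g -> bilin (fun a b => f a b + g a b).
Proof.
move=> [Hf1 Hf2] [Hg1 Hg2]; split=> *.
  by rewrite Hf1 Hg1 scalerDr addrACA.
by rewrite Hf2 Hg2 scalerDr addrACA.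
Qed.
Lemma bilin_scale M N P (f : M -> N -> P) d : bilin f -> bilin (fun a b => d *: f a b).
Proof.
move=> [Hf1 Hf2]; split=> *.
  by rewrite Hf1 scalerDr !scalerA mulrC.
by rewrite Hf2 scalerDr !scalerA mulrC.
Qed.
Lemma bilin_pre M N P (M' N' : lmodType k) (f : M -> N -> P) (g : M' -> M) (h : N' -> N) :
  bilin f -> lin g -> lin h -> bilin (fun a b => f (g a) (h b)).
Proof. by move=> [Hf1 Hf2] Hg Hh; split=> *; rewrite ?Hg ?Hh ?Hf1 ?Hf2. Qed.
Lemma bilin_post M N P Q (f : M -> N -> P) (L : P -> Q) :
  bilin f -> lin L -> bilin (fun a b => L (f a b)).
Proof. by move=> [Hf1 Hf2] HL; split=> *; rewrite ?Hf1 ?Hf2 HL. Qed.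

Lemma fsum_lin M N P Q (f : M -> N -> P) (L : P -> Q) s :
  lin L -> L (fsum f s) = fsum (fun a b => L (f a b)) s.
Proof.
move=> HL; elim: s => [|x s IH]; first by rewrite /fsum !big_nil lin0.
by move: IH; rewrite /fsum !big_cons HL => ->.
Qed.

Lemma tlift_linC M N P Q (f : M -> N -> P) (L : P -> Q) t :
  lin L -> L (tlift f t) = tlift (fun a b => L (f a b)) t.
Proof. exact: fsum_lin. Qed.

Lemma tlift_ext M N P (f g : M -> N -> P) t :
  (forall a b, f a b = g a b) -> tlift f t = tlift g t.
Proof. by move=> H; rewrite /tlift /fsum; apply: eq_bigr => x _; rewrite H. Qed.

Lemma tlift_comb M N P (f g : M -> N -> P) c t :
  tlift (fun a b => c *: f a b + g a b) t = c *: tlift f t + tlift g t.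
Proof.
rewrite /tlift /fsum scaler_sumr -big_split; apply: eq_bigr => x _.
by rewrite scalerDr !scalerA mulrC.
Qed.

Lemma tlift_add M N P (f g : M -> N -> P) t :
  tlift (fun a b => f a b + g a b) t = tlift f t + tlift g t.
Proof. by rewrite -[tlift f t]scale1r -tlift_comb; apply: tlift_ext => a b; rewrite scale1r. Qed.

Lemma tlift_scale M N P (f : M -> N -> P) c t :
  tlift (fun a b => c *: f a b) t = c *: tlift f t.
Proof.
have Z : tlift (fun _ _ => 0 : P) t = 0.
  by rewrite /tlift /fsum big1 // => x _; rewrite scaler0.
by rewrite -[RHS]addr0 -Z -tlift_comb; apply: tlift_ext => a b; rewrite addr0.
Qed.

Lemma tlift_lin M N P (f : M -> N -> P) : bilin f -> lin (tlift f).
Proof.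
move=> Hf c x y.
rewrite /tlift.
change (fsum f (trepr (tpi (trepr (tpi (sscale c (trepr x))) ++ trepr y))) =
   c *: fsum f (trepr x) + fsum f (trepr y)).
by rewrite !fsum_trepr // fsum_cat fsum_trepr // fsum_scale.
Qed.

Lemma tens_bilin M N : bilin (@tens k M N).
Proof.
split=> c a a' b.
  change (tpi [:: (1, (c *: a + a', b))] = tadd (tscale c (tpi [:: (1,(a,b))])) (tpi [:: (1,(a',b))])).
  rewrite /tadd /tscale; tsolve.
  by rewrite /fsum /sscale /= !big_cons !big_nil !addr0 ?scale1r ?mulr1 Hf.1.
change (tpi [:: (1, (a, c *: a' + b))] = tadd (tscale c (tpi [:: (1,(a,a'))])) (tpi [:: (1,(a,b))])).
rewrite /tadd /tscale; tsolve.
by rewrite /fsum /sscale /= !big_cons !big_nil !addr0 ?scale1r ?mulr1 Hf.2.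
Qed.

Lemma tensDl M N (a a' : M) (b : N) : tens (a + a') b = tens a b + tens a' b.
Proof. by have [H1 H2] := tens_bilin M N; rewrite -[a]scale1r H1 !scale1r. Qed.
Lemma tensDr M N (a : M) (b b' : N) : tens a (b + b') = tens a b + tens a b'.
Proof. by have [H1 H2] := tens_bilin M N; rewrite -[b]scale1r H2 !scale1r. Qed.
Lemma tensZl M N c (a : M) (b : N) : tens (c *: a) b = c *: tens a b.
Proof.
have [H1 H2] := tens_bilin M N.
have E : tens (0:M) b = 0 by have := H1 (-1) 0 0 b; rewrite scaler0 addr0 scaleN1r addNr.
by rewrite -[c *: a]addr0 H1 E addr0.
Qed.
Lemma tensZr M N c (a : M) (b : N) : tens a (c *: b) = c *: tens a b.
Proof.
have [H1 H2] := tens_bilin M N.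
have E : tens a (0:N) = 0 by have := H2 (-1) a 0 0; rewrite scaler0 addr0 scaleN1r addNr.
by rewrite -[c *: b]addr0 H2 E addr0.
Qed.

Lemma tpi_fsum M N (s : seq (k * (M * N))) : tpi s = fsum (@tens k M N) s.
Proof.
elim: s => [|[c [m n]] s IH]; first by rewrite /fsum big_nil.
rewrite /fsum big_cons -/(fsum _ s) -IH /=.
change (tpi ((c,(m,n)) :: s) = tadd (tscale c (tpi [:: (1, (m,n))])) (tpi s)).
rewrite /tadd /tscale.
tsolve.
by rewrite /fsum /sscale /= !big_cons !big_nil ?addr0 /= scale1r.
Qed.

Lemma lin_ext M N P (L1 L2 : tensor M N -> P) :
  lin L1 -> lin L2 -> (forall a b, L1 (tens a b) = L2 (tens a b)) -> forall t, L1 t = L2 t.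
Proof.
move=> H1 H2 H t; rewrite -(treprK t) tpi_fsum !fsum_lin //.
by rewrite /fsum; apply: eq_bigr => x _; rewrite H.
Qed.

Lemma bilin_tlift_inner M N (M' N' : lmodType k) P (H : M -> N -> M' -> N' -> P) Y :
  (forall c d, bilin (fun a b => H a b c d)) -> bilin (fun a b => tlift (H a b) Y).
Proof.
move=> HH; split=> *.
  by rewrite -tlift_comb; apply: tlift_ext => c d; rewrite (HH c d).1.
by rewrite -tlift_comb; apply: tlift_ext => c d; rewrite (HH c d).2.
Qed.

Lemma bilin_tlift_outer M N (M' : lmodType k) P (H : M' -> M -> N -> P) :
  (forall c, bilin (H c)) -> (forall a b, lin (fun c => H c a b)) ->
  bilin (fun X c => tlift (H c) X).
Proof.
move=> H1 H2; split=> *.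
  by rewrite tlift_lin.
by rewrite -tlift_comb; apply: tlift_ext => a b; rewrite H2.
Qed.

Lemma lin_l M N P (f : M -> N -> P) : bilin f -> forall b, lin (fun a => f a b).
Proof. by move=> [H _] b c x y; rewrite H. Qed.
Lemma lin_r M N P (f : M -> N -> P) : bilin f -> forall a, lin (f a).
Proof. by move=> [_ H] a c x y; rewrite H. Qed.

Definition tmulg M N (m1 : M -> M -> M) (m2 : N -> N -> N) (X Y : tensor M N) : tensor M N :=
  tlift (fun a b => tlift (fun c d => tens (m1 a c) (m2 b d)) Y) X.

Lemma tmulg_bilin M N (m1 : M -> M -> M) (m2 : N -> N -> N) :
  bilin m1 -> bilin m2 -> bilin (tmulg m1 m2).
Proof.
move=> H1 H2; split=> c X X' Y.
  rewrite /tmulg tlift_lin //; apply: bilin_tlift_inner => c' d'.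
  by apply: bilin_pre; [exact: tens_bilin | exact: lin_l | exact: lin_l].
rewrite /tmulg -tlift_comb; apply: tlift_ext => a b.
by rewrite tlift_lin //; apply: bilin_pre; [exact: tens_bilin | exact: lin_r | exact: lin_r].
Qed.

Lemma tmulg_tens M N (m1 : M -> M -> M) (m2 : N -> N -> N) a b c d :
  bilin m1 -> bilin m2 -> tmulg m1 m2 (tens a b) (tens c d) = tens (m1 a c) (m2 b d).
Proof.
move=> H1 H2; rewrite /tmulg.
rewrite (@tlift_ext _ _ _ _ (fun a b => tens (m1 a c) (m2 b d))); last first.
  by move=> a' b'; rewrite tlift_tens //; apply: bilin_pre; [exact: tens_bilin | exact: lin_r | exact: lin_r].
by rewrite tlift_tens //; apply: bilin_pre; [exact: tens_bilin | exact: lin_l | exact: lin_l].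
Qed.

Lemma tassoc_bilin M N Q :
  bilin (fun (x : tensor M N) (c : Q) => tlift (fun a b => tens a (tens b c)) x).
Proof.
apply: bilin_tlift_outer => [c|a b].
  by apply: bilin_pre; [exact: tens_bilin | exact: lin_id | apply: lin_l; exact: tens_bilin].
by apply: lin_comp; apply: lin_r; exact: tens_bilin.
Qed.

Lemma tassoc_lin M N Q : lin (@tassoc k M N Q).
Proof. exact: tlift_lin (tassoc_bilin M N Q). Qed.

Lemma tassoc_tens M N Q (a : M) (b : N) (c : Q) : tassoc (tens (tens a b) c) = tens a (tens b c).
Proof.
rewrite /tassoc tlift_tens; last exact: tassoc_bilin.
rewrite tlift_tens //; apply: bilin_pre; [exact: tens_bilin | exact: lin_id | apply: lin_l; exact: tens_bilin].
Qed.

Lemma tmap_bilin M N M' N' (f : M -> M') (g : N -> N') :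
  lin f -> lin g -> bilin (fun a b => tens (f a) (g b)).
Proof. by move=> Hf Hg; apply: bilin_pre => //; exact: tens_bilin. Qed.

Lemma tmap_lin M N M' N' (f : M -> M') (g : N -> N') : lin f -> lin g -> lin (tmap f g).
Proof. by move=> Hf Hg; apply: tlift_lin; exact: tmap_bilin. Qed.

Lemma tmap_tens M N M' N' (f : M -> M') (g : N -> N') a b :
  lin f -> lin g -> tmap f g (tens a b) = tens (f a) (g b).
Proof. by move=> Hf Hg; rewrite /tmap tlift_tens //; exact: tmap_bilin. Qed.

End Toolkit.
Section Main.
Variables (k : comPzRingType) (lam kap mu : k).
Variables (A : comAlgType k) (DA : A -> tensor A A) (eA : A -> k).
Variables (F : comAlgType k) (P : F -> F) (j : A -> F) (e : F -> k) (D : F -> tensor F F).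
Hypothesis hA : is_bialgebra (fun x y : A => x * y) (fun c : k => c%:A) DA eA.
Hypothesis hfree : free_comm_ext_RB lam kap P j.
Hypothesis he : is_counit_e mu P j eA e.
Hypothesis hD : is_comul_e mu P j DA e D.

Let m := fun x y : F => x * y.

Lemma m_bilin : bilin m.
Proof. by split=> *; rewrite /m ?mulrDl ?mulrDr -?scalerAl -?scalerAr. Qed.

Lemma Plin : lin P. Proof. by case: hfree => [[]]. Qed.
Lemma jlin : lin j. Proof. by case: hfree => _ []. Qed.
Lemma elin : slin e. Proof. by case: he. Qed.
Lemma emul x y : e (x * y) = e x * e y. Proof. by case: he => _ ->. Qed.
Lemma e1 : e 1 = 1. Proof. by case: he. Qed.
Lemma ej a : e (j a) = eA a. Proof. by case: he. Qed.
Lemma eP x : e (P x) = - mu * e x. Proof. by case: he. Qed.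
Lemma Dlin : lin D. Proof. by case: hD. Qed.
Lemma Dmul x y : D (x * y) = tmul m (D x) (D y). Proof. by case: hD => _ ->. Qed.
Lemma D1 : D 1 = tens 1 1. Proof. by case: hD. Qed.
Lemma Dj a : D (j a) = tmap j j (DA a). Proof. by case: hD. Qed.
Lemma DP x : D (P x) = Pbar mu P e (D x). Proof. by case: hD. Qed.

Lemma e0 : e 0 = 0.
Proof. by have := elin (-1) 0 0; rewrite scaler0 addr0 mulN1r addNr. Qed.
Lemma eZ c x : e (c *: x) = c * e x.
Proof. by rewrite -[c *: x]addr0 elin e0 addr0. Qed.
Lemma eD x y : e (x + y) = e x + e y.
Proof. by have := elin 1 x y; rewrite scale1r mul1r. Qed.

Lemma esc_lin (v : tensor F F) : lin (fun x => e x *: v).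
Proof. exact: lin_sc elin. Qed.
Lemma esc_lin1 : lin (fun x => e x *: (1 : F)).
Proof. exact: lin_sc elin. Qed.

Definition phil (a b : F) := e a *: b.
Definition phir (a b : F) := e b *: a.
Lemma phil_bilin : bilin phil.
Proof. by split=> *; rewrite /phil ?elin ?scalerDl ?scalerDr ?scalerA // mulrC. Qed.
Lemma phir_bilin : bilin phir.
Proof. by split=> *; rewrite /phir ?elin ?scalerDl ?scalerDr ?scalerA // mulrC. Qed.

Lemma pb_bilin : bilin (fun a b : F => tens (P a) (e b *: 1) + mu *: tens a (e b *: 1) + tens a (P b)).
Proof.
apply: bilin_add; first apply: bilin_add.
- by apply: bilin_pre; [exact: tens_bilin | exact: Plin | exact: esc_lin1].
- by apply: bilin_scale; apply: bilin_pre; [exact: tens_bilin | exact: lin_id | exact: esc_lin1].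
- by apply: bilin_pre; [exact: tens_bilin | exact: lin_id | exact: Plin].
Qed.

Lemma Pb_lin : lin (Pbar mu P e).
Proof. exact: tlift_lin pb_bilin. Qed.

Lemma Pb_tens a b : Pbar mu P e (tens a b) =
  tens (P a) (e b *: 1) + mu *: tens a (e b *: 1) + tens a (P b).
Proof. by rewrite /Pbar tlift_tens //; exact: pb_bilin. Qed.


Lemma tmul_bilin : bilin (tmul m).
Proof. exact: (tmulg_bilin m_bilin m_bilin). Qed.
Lemma tmul_tens a b c d : tmul m (tens a b) (tens c d) = tens (a * c) (b * d).
Proof. exact: (tmulg_tens a b c d m_bilin m_bilin). Qed.

Lemma Phil_lin : lin (tlift phil). Proof. exact: tlift_lin phil_bilin. Qed.
Lemma Phir_lin : lin (tlift phir). Proof. exact: tlift_lin phir_bilin. Qed.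

Lemma mulr_lin_l (w : F) : lin (fun y => y * w).
Proof. exact: lin_l m_bilin w. Qed.
Lemma mulr_lin_r (w : F) : lin (fun y => w * y).
Proof. exact: lin_r m_bilin w. Qed.

Lemma tmul_lin_l V : lin (fun U => tmul m U V). Proof. exact: lin_l tmul_bilin V. Qed.
Lemma tmul_lin_r U : lin (fun V => tmul m U V). Proof. exact: lin_r tmul_bilin U. Qed.

Lemma mult_ext (phi : F -> F -> F) : bilin phi ->
  (forall a b c d, phi (a * c) (b * d) = phi a b * phi c d) ->
  forall U V, tlift phi (tmul m U V) = tlift phi U * tlift phi V.
Proof.
move=> Hb Hm U V.
have Hl := tlift_lin Hb.
move: U; apply: lin_ext.
- exact: lin_comp Hl (tmul_lin_l V).
- exact: lin_comp (mulr_lin_l _) Hl.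
move=> a b; move: V; apply: lin_ext.
- exact: lin_comp Hl (tmul_lin_r _).
- exact: lin_comp (mulr_lin_r _) Hl.
by move=> c d; rewrite tmul_tens !tlift_tens.
Qed.

Lemma Phil_mul U V : tlift phil (tmul m U V) = tlift phil U * tlift phil V.
Proof.
apply: mult_ext; first exact: phil_bilin.
by move=> a b c d; rewrite /phil emul -scalerAl -scalerAr scalerA.
Qed.
Lemma Phir_mul U V : tlift phir (tmul m U V) = tlift phir U * tlift phir V.
Proof.
apply: mult_ext; first exact: phir_bilin.
by move=> a b c d; rewrite /phir emul -scalerAl -scalerAr scalerA mulrC.
Qed.

Lemma PZ c x : P (c *: x) = c *: P x. Proof. have := @linZ _ _ _ P Plin c x. by []. Qed.
Lemma PD x y : P (x + y) = P x + P y. Proof. have := @linD _ _ _ P Plin x y. by []. Qed.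

Lemma Phil_P U : tlift phil (Pbar mu P e U) = P (tlift phil U).
Proof.
move: U; apply: lin_ext.
- exact: lin_comp Phil_lin Pb_lin.
- exact: lin_comp Plin Phil_lin.
move=> a b; rewrite Pb_tens !(linD Phil_lin) (linZ Phil_lin) !tlift_tens; try exact: phil_bilin.
rewrite /phil eP PZ !scalerA !mulNr scaleNr addNr add0r.
by [].
Qed.

Lemma Phir_P U : tlift phir (Pbar mu P e U) = P (tlift phir U).
Proof.
move: U; apply: lin_ext.
- exact: lin_comp Phir_lin Pb_lin.
- exact: lin_comp Plin Phir_lin.
move=> a b; rewrite Pb_tens !(linD Phir_lin) (linZ Phir_lin) !tlift_tens; try exact: phir_bilin.
rewrite /phir eP PZ eZ e1 mulr1 scalerA mulNr scaleNr.
by rewrite addrK.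
Qed.

Lemma DAlin : lin DA. Proof. by case: hA. Qed.
Lemma eAlin : slin eA. Proof. by case: hA. Qed.

Lemma Phil_j U : tlift phil (tmap j j U) = j (tlift (fun a b => eA a *: b) U).
Proof.
have HA : bilin (fun a b : A => eA a *: b).
  by split=> *; rewrite ?eAlin ?scalerDl ?scalerDr ?scalerA // mulrC.
move: U; apply: lin_ext.
- exact: lin_comp Phil_lin (tmap_lin jlin jlin).
- exact: lin_comp jlin (tlift_lin HA).
move=> a b; rewrite tmap_tens; try exact: jlin.
rewrite (tlift_tens _ _ phil_bilin) (tlift_tens _ _ HA).
by rewrite /phil ej (linZ jlin).
Qed.

Lemma Phir_j U : tlift phir (tmap j j U) = j (tlift (fun a b => eA b *: a) U).
Proof.
have HA : bilin (fun a b : A => eA b *: a).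
  by split=> *; rewrite ?eAlin ?scalerDl ?scalerDr ?scalerA // mulrC.
move: U; apply: lin_ext.
- exact: lin_comp Phir_lin (tmap_lin jlin jlin).
- exact: lin_comp jlin (tlift_lin HA).
move=> a b; rewrite tmap_tens; try exact: jlin.
rewrite (tlift_tens _ _ phir_bilin) (tlift_tens _ _ HA).
by rewrite /phir ej (linZ jlin).
Qed.


Lemma counit_l x : tlift phil (D x) = x.
Proof.
elim/(F_ind hfree): x.
- by rewrite D1 tlift_tens ?/phil ?e1 ?scale1r //; exact: phil_bilin.
- by move=> c x y Hx Hy; rewrite Dlin Phil_lin Hx Hy.
- by move=> x y Hx Hy; rewrite Dmul Phil_mul Hx Hy.
- by move=> x Hx; rewrite DP Phil_P Hx.
- by move=> a; rewrite Dj Phil_j; case: hA => _ _ _ _ _ _ _ _ -> .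
Qed.

Lemma counit_r x : tlift phir (D x) = x.
Proof.
elim/(F_ind hfree): x.
- by rewrite D1 tlift_tens ?/phir ?e1 ?scale1r //; exact: phir_bilin.
- by move=> c x y Hx Hy; rewrite Dlin Phir_lin Hx Hy.
- by move=> x y Hx Hy; rewrite Dmul Phir_mul Hx Hy.
- by move=> x Hx; rewrite DP Phir_P Hx.
- by move=> a; rewrite Dj Phir_j; case: hA => _ _ _ _ _ _ _ _ _ -> .
Qed.


Definition eps2 := tlift (fun b c : F => (e b * e c) *: tens (1:F) (1:F)).
Lemma eps2_bilin : bilin (fun b c : F => (e b * e c) *: tens (1:F) (1:F)).
Proof. by split=> c a a' b; rewrite elin ?mulrDl ?mulrDr ?scalerDl ?scalerA ?mulrA // (mulrC (e a) c). Qed.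
Lemma eps2_lin : lin eps2. Proof. exact: tlift_lin eps2_bilin. Qed.
Lemma eps2_tens a b : eps2 (tens a b) = (e a * e b) *: tens 1 1.
Proof. by rewrite /eps2 tlift_tens //; exact: eps2_bilin. Qed.
Lemma eps2_D b : eps2 (D b) = e b *: tens 1 1.
Proof.
have E : forall U, eps2 U = e (tlift phil U) *: tens 1 1.
  apply: lin_ext; first exact: eps2_lin.
    exact: lin_comp (esc_lin _) Phil_lin.
  by move=> a c; rewrite eps2_tens tlift_tens /phil ?eZ //; exact: phil_bilin.
by rewrite E counit_l.
Qed.

Definition p3f (a : F) (t : tensor F F) :=
  tens (P a) (eps2 t) + mu *: tens a (eps2 t) + tens a (Pbar mu P e t).
Lemma p3f_bilin : bilin p3f.
Proof.
apply: bilin_add; first apply: bilin_add.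
- by apply: bilin_pre; [exact: tens_bilin | exact: Plin | exact: eps2_lin].
- by apply: bilin_scale; apply: bilin_pre; [exact: tens_bilin | exact: lin_id | exact: eps2_lin].
- by apply: bilin_pre; [exact: tens_bilin | exact: lin_id | exact: Pb_lin].
Qed.
Definition P3 := tlift p3f.
Lemma P3_lin : lin P3. Proof. exact: tlift_lin p3f_bilin. Qed.
Lemma P3_tens a t : P3 (tens a t) = p3f a t.
Proof. exact: tlift_tens p3f_bilin. Qed.

Definition mul3 := tmulg m (tmul m).
Lemma mul3_bilin : bilin mul3. Proof. exact: tmulg_bilin m_bilin tmul_bilin. Qed.
Lemma mul3_tens a U c V : mul3 (tens a U) (tens c V) = tens (a * c) (tmul m U V).
Proof. exact: tmulg_tens m_bilin tmul_bilin. Qed.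

Definition Lam (U : tensor F F) := tassoc (tmap D id U).
Definition Rho (U : tensor F F) := tmap id D U.
Lemma Lam_lin : lin Lam.
Proof. exact: lin_comp (@tassoc_lin _ _ _ _) (tmap_lin Dlin (@lin_id _ _)). Qed.
Lemma Rho_lin : lin Rho.
Proof. exact: tmap_lin (@lin_id _ _) Dlin. Qed.
Lemma Lam_tens a b : Lam (tens a b) = tassoc (tens (D a) b).
Proof. by rewrite /Lam tmap_tens //; exact: Dlin. Qed.
Lemma Rho_tens a b : Rho (tens a b) = tens a (D b).
Proof. by rewrite /Rho tmap_tens //; exact: Dlin. Qed.


Lemma tensl_lin (b : F) : lin (fun U : tensor F F => tens U b).
Proof. exact: lin_l (tens_bilin _ _) b. Qed.

Lemma chi U V b d :
  tassoc (tens (tmul m U V) (b * d)) = mul3 (tassoc (tens U b)) (tassoc (tens V d)).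
Proof.
have TA := @tassoc_lin k F F F.
move: U; apply: lin_ext.
- exact: lin_comp TA (lin_comp (tensl_lin _) (tmul_lin_l _)).
- exact: lin_comp (lin_l mul3_bilin _) (lin_comp TA (tensl_lin _)).
move=> a1 a2; move: V; apply: lin_ext.
- exact: lin_comp TA (lin_comp (tensl_lin _) (tmul_lin_r _)).
- exact: lin_comp (lin_r mul3_bilin _) (lin_comp TA (tensl_lin _)).
move=> c1 c2.
by rewrite tmul_tens !tassoc_tens mul3_tens tmul_tens.
Qed.

Lemma Lam_mul U V : Lam (tmul m U V) = mul3 (Lam U) (Lam V).
Proof.
move: U; apply: lin_ext.
- exact: lin_comp Lam_lin (tmul_lin_l _).
- exact: lin_comp (lin_l mul3_bilin _) Lam_lin.
move=> a b; move: V; apply: lin_ext.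
- exact: lin_comp Lam_lin (tmul_lin_r _).
- exact: lin_comp (lin_r mul3_bilin _) Lam_lin.
move=> c d.
by rewrite tmul_tens !Lam_tens Dmul chi.
Qed.

Lemma Rho_mul U V : Rho (tmul m U V) = mul3 (Rho U) (Rho V).
Proof.
move: U; apply: lin_ext.
- exact: lin_comp Rho_lin (tmul_lin_l _).
- exact: lin_comp (lin_l mul3_bilin _) Rho_lin.
move=> a b; move: V; apply: lin_ext.
- exact: lin_comp Rho_lin (tmul_lin_r _).
- exact: lin_comp (lin_r mul3_bilin _) Rho_lin.
move=> c d.
by rewrite tmul_tens !Rho_tens Dmul mul3_tens.
Qed.


Lemma Lam_P U : Lam (Pbar mu P e U) = P3 (Lam U).
Proof.
have TA := @tassoc_lin k F F F.
move: U; apply: lin_ext.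
- exact: lin_comp Lam_lin Pb_lin.
- exact: lin_comp P3_lin Lam_lin.
move=> a b; rewrite Pb_tens !(linD Lam_lin) (linZ Lam_lin) !Lam_tens DP.
move: (D a) => V; move: V; apply: lin_ext.
- apply: lin_add; first apply: lin_add.
  + exact: lin_comp TA (lin_comp (tensl_lin _) Pb_lin).
  + exact: lin_scale (lin_comp TA (tensl_lin _)).
  + exact: lin_comp TA (tensl_lin _).
- exact: lin_comp P3_lin (lin_comp TA (tensl_lin _)).
move=> a1 a2.
rewrite Pb_tens !tensDl tensZl !(linD TA) !(linZ TA) !tassoc_tens P3_tens /p3f eps2_tens Pb_tens.
rewrite !tensDr !tensZr !tensZl !tensZr !scalerA !mulrA !addrA.
by rewrite (mulrC (e b) (e a2)) -(mulrA mu (e b)) (mulrC (e b) (e a2)) mulrA.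
Qed.


Lemma Rho_P U : Rho (Pbar mu P e U) = P3 (Rho U).
Proof.
move: U; apply: lin_ext.
- exact: lin_comp Rho_lin Pb_lin.
- exact: lin_comp P3_lin Rho_lin.
move=> a b; rewrite Pb_tens !(linD Rho_lin) (linZ Rho_lin) !Rho_tens P3_tens /p3f.
by rewrite eps2_D DP (linZ Dlin) D1.
Qed.

Definition T3 := tmap j (tmap j j).
Lemma jj_lin : lin (tmap j j). Proof. exact: tmap_lin jlin jlin. Qed.
Lemma T3_lin : lin T3. Proof. exact: tmap_lin jlin jj_lin. Qed.

Lemma Lam_j U : Lam (tmap j j U) = T3 (tassoc (tmap DA id U)).
Proof.
have TA := @tassoc_lin k F F F.
have TAa := @tassoc_lin k A A A.
move: U; apply: lin_ext.
- exact: lin_comp Lam_lin jj_lin.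
- exact: lin_comp T3_lin (lin_comp TAa (tmap_lin DAlin (@lin_id _ _))).
move=> a b; rewrite tmap_tens; try exact: jlin.
rewrite Lam_tens Dj tmap_tens; [|exact: DAlin|exact: lin_id].
move: (DA a) => V; move: V; apply: lin_ext.
- exact: lin_comp TA (lin_comp (tensl_lin _) jj_lin).
- exact: lin_comp T3_lin (lin_comp TAa (lin_l (tens_bilin _ _) _)).
move=> a1 a2.
rewrite tmap_tens; try exact: jlin.
rewrite !tassoc_tens /T3 tmap_tens; [|exact: jlin|exact: jj_lin].
by rewrite tmap_tens //; exact: jlin.
Qed.

Lemma Rho_j U : Rho (tmap j j U) = T3 (tmap id DA U).
Proof.
move: U; apply: lin_ext.
- exact: lin_comp Rho_lin jj_lin.
- exact: lin_comp T3_lin (tmap_lin (@lin_id _ _) DAlin).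
move=> a b; rewrite tmap_tens; try exact: jlin.
rewrite Rho_tens Dj tmap_tens; [|exact: lin_id|exact: DAlin].
by rewrite /T3 tmap_tens //; [exact: jlin | exact: jj_lin].
Qed.

Lemma coassoc x : tassoc (tmap D id (D x)) = tmap id D (D x).
Proof.
change (Lam (D x) = Rho (D x)).
elim/(F_ind hfree): x.
- by rewrite D1 Lam_tens Rho_tens D1 tassoc_tens.
- by move=> c x y Hx Hy; rewrite Dlin Lam_lin Rho_lin Hx Hy.
- by move=> x y Hx Hy; rewrite Dmul Lam_mul Rho_mul Hx Hy.
- by move=> x Hx; rewrite DP Lam_P Rho_P Hx.
- by move=> a; rewrite Dj Lam_j Rho_j; case: hA => _ _ _ _ _ _ _ -> .
Qed.


Lemma main_sec : is_bialgebra (fun x y : F => x * y) (fun c : k => c%:A) D e.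
Proof.
constructor.
- exact: m_bilin.
- by move=> c x y; rewrite scalerDl scalerA.
- exact: Dlin.
- exact: elin.
- by move=> x y z; rewrite mulrA.
- by move=> c x; rewrite -scalerAl mul1r.
- by move=> c x; rewrite -scalerAr mulr1.
- exact: coassoc.
- exact: counit_l.
- exact: counit_r.
- exact: Dmul.
- by move=> c; rewrite (linZ Dlin) D1 tensZl scale1r.
- exact: emul.
- by move=> c; rewrite eZ e1 mulr1.
Qed.

End Main.

Unset Implicit Arguments.

Theorem theorem4p7 (k : comPzRingType) (lam kap mu : k)
    (A : comAlgType k) (DA : A -> tensor A A) (eA : A -> k)
    (F : comAlgType k) (P : F -> F) (j : A -> F)
    (e : F -> k) (D : F -> tensor F F) :
  mu ^+ 2 - lam * mu + kap = 0 ->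
  is_bialgebra (fun x y : A => x * y) (fun c : k => c%:A) DA eA ->
  free_comm_ext_RB lam kap P j ->
  is_counit_e mu P j eA e ->
  is_comul_e mu P j DA e D ->
  is_bialgebra (fun x y : F => x * y) (fun c : k => c%:A) D e.
Proof. by move=> _ hA hfree he hD; exact: main_sec hA hfree he hD. Qed.
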